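(* Let $a\geq 1$ and $b\geq 1$ be integers. For Lebesgue-almost every $x\in\Lambda^{a+b}$ we have $\lim_{k\to\infty}T_{a,b}^k(x)=(x_1^{\infty},\ldots,x_{a+b}^{\infty})$ with $x_1^{\infty}=x_2^{\infty}=\cdots=x_{a+1}^{\infty}=0$.
   Context: For $n\geq 1$ let $\Lambda^n=\{x\in\mathbb{R}^n : 0\leq x_1\leq\cdots\leq x_n\}$. For integers $a,b\geq 1$ the map $T_{a,b}:\Lambda^{a+b}\to\Lambda^{a+b}$ sends $x$ to the vector obtained by arranging $x_1,\ldots,x_a,\,x_{a+1}-x_a,\ldots,x_{a+b}-x_a$ in nondecreasing order. *)

(* Defs.v *)
From HB Require Import structures.
From mathcomp Require Import all_boot all_order all_algebra.
From mathcomp Require Import all_classical all_reals topology normedtype sequences.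
Set Implicit Arguments. Unset Strict Implicit. Unset Printing Implicit Defensive.
Import Order.TTheory GRing.Theory Num.Theory.
Import numFieldTopology.Exports numFieldNormedType.Exports.
Local Open Scope ring_scope.

(* Vectors of R^n are functions 'I_n -> R; coordinate x_{k+1} of the paper is x k. *)

Definition Lambda (R : realType) (n : nat) (x : 'I_n -> R) : Prop :=
  (forall i : 'I_n, 0 <= x i) /\ (forall i j : 'I_n, (i <= j)%N -> x i <= x j).

(* coordinate with index given as a nat (0-based); 0 if out of range *)
Definition coord (R : realType) (n : nat) (x : 'I_n -> R) (k : nat) : R :=
  nth 0 [seq x j | j <- enum 'I_n] k.

(* T_{a,b}: arrange x_1..x_a, x_{a+1}-x_a, ..., x_{a+b}-x_a in nondecreasing order.
   (0-based: entries j < a are kept, entries j >= a get x_{a-1} subtracted.) *)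
Definition Tab (R : realType) (a b : nat) (x : 'I_(a + b) -> R) : 'I_(a + b) -> R :=
  let s := [seq (if (j < a)%N then x j else x j - coord x a.-1) | j : 'I_(a + b) <- enum 'I_(a + b)] in
  fun i => nth 0 (sort (fun u v : R => u <= v) s) i.

Definition lebesgue_null (R : realType) (n : nat) (N : ('I_n -> R) -> Prop) : Prop :=
  forall eps : R, 0 < eps ->
    exists (l u : nat -> 'I_n -> R),
      (forall m i, l m i <= u m i) /\
      (forall x, N x -> exists m, forall i, l m i <= x i <= u m i) /\
      (forall M : nat, \sum_(m < M) \prod_(i < n) (u m i - l m i) <= eps).

(* Main.v *)
Require Import Defs.
From HB Require Import structures.
From mathcomp Require Import all_boot all_order all_algebra.
From mathcomp Require Import all_classical all_reals topology normedtype sequences.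
From mathcomp Require Import zify lra ring fingroup perm.
From Stdlib Require Import Cantor.
Import Order.TTheory GRing.Theory Num.Theory.
Import numFieldTopology.Exports numFieldNormedType.Exports.
Set Implicit Arguments. Unset Strict Implicit. Unset Printing Implicit Defensive.
Local Open Scope classical_set_scope.
Local Open Scope ring_scope.


Lemma sorted_count (R : realType) (p : pred R) (t : seq R) :
  (forall y z, z <= y -> p y -> p z) -> sorted <=%R t ->
  forall i, (i < size t)%N -> p (nth 0 t i) = (i < count p t)%N.
Proof.
move=> pdc; elim: t => [//|x t IH] st.
have Hall : all (<=%R x) t by apply: order_path_min => //; exact: le_trans.
have c0 : ~~ p x -> count p t = 0%N.
  move=> npx; apply/eqP; rewrite -leqn0 leqNgt -has_count; apply/hasPn => y yt.
  apply/negP => py; move/allP: Hall => /(_ y yt) xy.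
  by rewrite (pdc _ _ xy py) in npx.
case=> [|i] /= hi.
  by case px: (p x) => //=; rewrite c0 ?px.
rewrite ltnS in hi.
case px: (p x) => /=.
  by rewrite IH ?(path_sorted st).
rewrite c0 ?px // ltn0; apply/negP => pn.
have : nth 0 t i \in t by apply: mem_nth.
move/allP: Hall => H /H xy. by rewrite (pdc _ _ xy pn) in px.
Qed.
Definition Fm (R : realType) (a b : nat) (x : 'I_(a + b) -> R) (j : 'I_(a + b)) : R :=
  if (j < a)%N then x j else x j - Defs.coord x a.-1.

Lemma coordE (R : realType) n (x : 'I_n -> R) k (hk : (k < n)%N) : Defs.coord x k = x (Ordinal hk).
Proof.
rewrite /Defs.coord (nth_map (Ordinal hk)) ?size_enum_ord //; congr x; apply: val_inj.
by rewrite /= nth_enum_ord.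
Qed.

Lemma Tab_perm (R : realType) a b (x : 'I_(a + b) -> R) :
  exists p : 'S_(a + b), forall i, Tab x i = Fm x (p i).
Proof.
set s := [seq Fm x j | j <- enum 'I_(a+b)].
have : perm_eq (sort <=%R s) [tuple Fm x j | j < a + b].
  by rewrite perm_sort /= perm_refl.
move/tuple_permP => [p hp]; exists p => i.
rewrite /Tab /=; change (nth 0 (sort <=%R s) i = Fm x (p i)); rewrite hp.
by rewrite -(tnth_nth 0) !tnth_mktuple.
Qed.

Lemma Tab_sorted (R : realType) a b (x : 'I_(a + b) -> R) (i j : 'I_(a+b)) :
  (i <= j)%N -> Tab x i <= Tab x j.
Proof.
move=> ij; rewrite /Tab; apply: (sorted_leq_nth le_trans lexx) => //.
- by apply: sort_sorted; exact: le_total.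
- by rewrite inE size_sort size_map size_enum_ord.
- by rewrite inE size_sort size_map size_enum_ord.
Qed.

Lemma count_lt (n m : nat) : count (fun j : 'I_n => (j < m)%N) (enum 'I_n) = minn m n.
Proof.
rewrite -(count_map val (fun k => (k < m)%N)) val_enum_ord.
elim: n => [|n IH]; first by rewrite minn0.
rewrite -addn1 iotaD count_cat IH /= add0n addn0; case: ltnP => ?; lia.
Qed.

Lemma TabP (R : realType) a b (x : 'I_(a + b) -> R) (p : pred R) :
  (forall y z, z <= y -> p y -> p z) -> forall i : 'I_(a+b),
  p (Tab x i) = (i < count (fun j => p (Fm x j)) (enum 'I_(a+b)))%N.
Proof.
move=> pdc i.
have -> : Tab x i = nth 0 (sort <=%R [seq Fm x j | j <- enum 'I_(a+b)]) i by [].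
rewrite sorted_count //; last by rewrite size_sort size_map size_enum_ord.
  have /seq.permP -> : perm_eq (sort <=%R [seq Fm x j | j <- enum 'I_(a+b)])
     [seq Fm x j | j <- enum 'I_(a+b)] by rewrite perm_sort.
  by rewrite count_map.
by apply: sort_sorted; exact: le_total.
Qed.

Lemma FmE (R : realType) a b (x : 'I_(a + b) -> R) (u : 'I_(a+b)) :
  val u = a.-1 -> forall j, Fm x j = if (j < a)%N then x j else x j - x u.
Proof.
move=> hu j; rewrite /Fm; case: ifP => // _.
have hk : (a.-1 < a + b)%N by rewrite -hu ltn_ord.
rewrite (coordE x hk); congr (_ - x _); apply: val_inj => /=; by rewrite hu.
Qed.

Lemma Tab_Lambda (R : realType) a b (x : 'I_(a + b) -> R) (u : 'I_(a+b)) :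
  val u = a.-1 -> Lambda x -> Lambda (Tab x).
Proof.
move=> hu [x0 xm]; split; last by move=> i j; exact: Tab_sorted.
move=> i; have [p ->] := Tab_perm x; rewrite (FmE x hu).
case: ifP => h; first exact: x0.
rewrite subr_ge0; apply: xm; rewrite hu; move: h; lia.
Qed.

Lemma Tab_le (R : realType) a b (x : 'I_(a + b) -> R) (u : 'I_(a+b)) :
  val u = a.-1 -> Lambda x -> forall i, Tab x i <= x i.
Proof.
move=> hu [x0 xm] i.
have := TabP x (p := fun y => y <= x i).
move=> -> //; last by move=> y z zy yx; exact: le_trans zy yx.
apply: (@leq_trans (count (fun j : 'I_(a+b) => (j < i.+1)%N) (enum 'I_(a+b)))).
  rewrite count_lt; have := ltn_ord i; lia.
apply: sub_count => j /= ji; rewrite (FmE x hu).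
have xji : x j <= x i by apply: xm.
case: ifP => // _; rewrite lerBlDr; apply: (le_trans xji); rewrite lerDl; exact: x0.
Qed.

Lemma Tab_sum (R : realType) a b (x : 'I_(a + b) -> R) (u v : 'I_(a+b)) :
  val u = a.-1 -> val v = a -> Lambda x ->
  \sum_i Tab x i <= \sum_i x i - x u.
Proof.
move=> hu hv [x0 xm].
have [p hp] := Tab_perm x.
have -> : \sum_i Tab x i = \sum_i Fm x i.
  rewrite [RHS](reindex_inj (@perm_inj _ p)); apply: eq_bigr => i _; by rewrite hp.
rewrite (bigD1 v) //= [X in _ <= X - _](bigD1 v) //= (FmE x hu) hv ltnn.
have : \sum_(i | i != v) Fm x i <= \sum_(i | i != v) x i.
  apply: ler_sum => i _; rewrite (FmE x hu); case: ifP => // _.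
  by rewrite lerBlDr lerDl.
lra.
Qed.

Lemma Tab_key (R : realType) a b (x : 'I_(a + b) -> R) (u v : 'I_(a+b)) (c : R) :
  (0 < a)%N -> val u = a.-1 -> val v = a -> Lambda x ->
  x u < c -> c <= Tab x v -> Tab x u = x u.
Proof.
move=> ha hu hv [x0 xm] uc cv.
apply/eqP; rewrite eq_le (Tab_le hu) //=.
rewrite leNgt; apply/negP => H.
set A := (fun j : 'I_(a+b) => (j < a)%N).
set q := (fun j : 'I_(a+b) => Fm x j < x u).
set C := (fun j : 'I_(a+b) => Fm x j < c).
have h1 : (count C (enum 'I_(a+b)) <= a)%N.
  have pd : forall y z : R, z <= y -> y < c -> z < c.
    by move=> y z zy yc; exact: le_lt_trans zy yc.
  have := TabP x pd v.
  rewrite ltNge cv /= hv => E; rewrite leqNgt -E //.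
have h2 : (a.-1 < count q (enum 'I_(a+b)))%N.
  have pd : forall y z : R, z <= y -> y < x u -> z < x u.
    by move=> y z zy yc; exact: le_lt_trans zy yc.
  have := TabP x pd u.
  by rewrite H hu => <-.
have h3 : (count (predU A q) (enum 'I_(a+b)) <= count C (enum 'I_(a+b)))%N.
  apply: sub_count => j /=; rewrite /A /q /C /= (FmE x hu).
  case/orP => [ja|].
    rewrite ja; apply: le_lt_trans uc; apply: xm; rewrite hu; lia.
  by move/lt_trans; apply.
have h4 := count_predUI A q (enum 'I_(a+b)).
have h5 : count A (enum 'I_(a+b)) = a by rewrite count_lt; lia.
have h6 : (count (predI A q) (enum 'I_(a+b)) <= a.-1)%N.
  have <- : count (fun j : 'I_(a+b) => (j < a.-1)%N) (enum 'I_(a+b)) = a.-1.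
    by rewrite count_lt; lia.
  apply: sub_count => j /=; rewrite /A /q /= (FmE x hu).
  case/andP => ja; rewrite ja => xj.
  rewrite -hu ltnNge; apply/negP => uj.
  by have := xm _ _ uj; rewrite leNgt xj.
lia.
Qed.

Lemma Tab_lin (R : realType) a b (x y : 'I_(a + b) -> R) (M : 'M[int]_(a+b)) (u : 'I_(a+b)) :
  (0 < a)%N -> val u = a.-1 -> M \in unitmx ->
  (forall i, y i = \sum_j (M i j)%:~R * x j) ->
  exists M' : 'M[int]_(a+b), M' \in unitmx /\
    forall i, Tab y i = \sum_j (M' i j)%:~R * x j.
Proof.
move=> ha hu hM hy.
have [p hp] := Tab_perm y.
pose E : 'M[int]_(a+b) := \matrix_(r, q) ((r == q)%:R - ((a <= r)%N && (q == u))%:R).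
have hE : forall r j, (E *m M) r j = M r j - ((a <= r)%N)%:R * M u j.
  move=> r j; rewrite !mxE.
  under eq_bigr do rewrite mxE mulrBl.
  rewrite sumrB; congr (_ - _).
    rewrite (bigD1 r) //= eqxx mul1r big1 ?addr0 // => k /negbTE.
    by rewrite eq_sym => ->; rewrite mul0r.
  rewrite (bigD1 u) //= eqxx andbT big1 ?addr0 // => k /negbTE ->.
  by rewrite andbF mul0r.
exists (row_perm p (E *m M)); split.
  rewrite row_permE !unitmx_mul unitmx_perm hM andbT /= unitmxE.
  rewrite det_trig.
    rewrite big1 ?unitr1 // => i _; rewrite mxE eqxx.
    case: eqP => [->|]; last by rewrite andbF subr0.
    by rewrite hu (_ : (a <= a.-1)%N = false) ?subr0 //; lia.
  apply/is_trig_mxP => i j ij; rewrite mxE.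
  have -> : (i == j) = false by apply/eqP => e; move: ij; rewrite e ltnn.
  case: eqP => [jv|]; last by rewrite andbF subrr.
  have : (i < a)%N by move: ij; rewrite jv hu; lia.
  by rewrite ltnNge => /negbTE ->; rewrite subrr.
move=> i; rewrite hp (FmE y hu).
under eq_bigr do rewrite mxE hE.
case: ifP => h; rewrite ?(leqNgt a) ?h /= hy ?hy -?sumrB; apply: eq_bigr => j _.
  by rewrite mul0r subr0.
by rewrite mul1r rmorphB /= mulrBl.
Qed.


Lemma cvg_test (R : realType) (w : nat -> R) :
  {homo w : n m / (n <= m)%N >-> m <= n} -> (forall k, 0 <= w k) ->
  [/\ w @ \oo --> limn w, forall k, limn w <= w k & 0 <= limn w].
Proof.
move=> hw h0.
have lb : has_lbound (range w) by exists 0 => _ [k _ <-].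
have H := nonincreasing_cvgn hw lb.
have E : limn w = inf (range w) by apply: cvg_lim.
have cw : cvgn w by apply/cvg_ex; exists (inf (range w)).
split.
- by rewrite E.
- exact: nonincreasing_cvgn_ge.
- by apply: limr_ge => //; apply: nearW.
Qed.


Lemma iter_Lambda (R : realType) a b (x : 'I_(a + b) -> R) (u : 'I_(a+b)) :
  val u = a.-1 -> Lambda x -> forall k, Lambda (iter k (@Tab R a b) x).
Proof. by move=> hu hx; elim=> [|k IH] //=; exact: (Tab_Lambda hu). Qed.

Lemma iter_noninc (R : realType) a b (x : 'I_(a + b) -> R) (u : 'I_(a+b)) :
  val u = a.-1 -> Lambda x -> forall i,
  {homo (fun k => iter k (@Tab R a b) x i) : n m / (n <= m)%N >-> m <= n}.
Proof.
move=> hu hx i n m /subnK <-; elim: (m - n)%N => [|d IH] /=; first by rewrite add0n.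
apply: le_trans IH; apply: (Tab_le hu).
exact: (iter_Lambda hu).
Qed.

Lemma sum_contra (R : realType) a b (x : 'I_(a + b) -> R) (u v : 'I_(a+b)) :
  val u = a.-1 -> val v = a -> Lambda x -> forall (K : nat) (m : R), 0 < m ->
  (forall k, (K <= k)%N -> m <= iter k (@Tab R a b) x u) -> False.
Proof.
move=> hu hv hx K m m0 hm.
pose X k := iter k (@Tab R a b) x.
pose S k := \sum_i X k i.
have S0 : forall k, 0 <= S k.
  by move=> k; apply: sumr_ge0 => i _; case: (iter_Lambda hu hx k) => h _; exact: h.
have SN : forall N, S (K + N)%N <= S K - N%:R * m.
  elim=> [|N IH]; first by rewrite addn0 mul0r subr0.
  rewrite addnS.
  have h1 : S (K + N).+1 <= S (K + N)%N - X (K + N)%N u.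
    by rewrite /S /X iterS; apply: (Tab_sum hu hv); exact: (iter_Lambda hu hx).
  have h2 : m <= X (K + N)%N u by apply: hm; rewrite leq_addr.
  have e : N.+1%:R * m = N%:R * m + m by rewrite -addn1 natrD mulrDl mul1r.
  lra.
pose N := (Num.truncn (S K / m)).+1.
have hN : S K / m < N%:R by exact: truncnS_gt.
have : S K < N%:R * m by rewrite -ltr_pdivrMr.
have := SN N; have := S0 (K + N)%N; lra.
Qed.

Lemma good (R : realType) a b (x : 'I_(a + b) -> R) (u v : 'I_(a+b)) :
  (0 < a)%N -> val u = a.-1 -> val v = a -> Lambda x ->
  (forall k, iter k (@Tab R a b) x u <> 0) ->
  exists y : 'I_(a + b) -> R,
    (forall i, (fun k : nat => iter k (@Tab R a b) x i) @ \oo --> y i) /\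
    (forall i : 'I_(a + b), (i <= a)%N -> y i = 0).
Proof.
move=> ha hu hv hx hnz.
pose w i k := iter k (@Tab R a b) x i.
have L k := iter_Lambda hu hx k.
have W i : [/\ w i @ \oo --> limn (w i), forall k, limn (w i) <= w i k & 0 <= limn (w i)].
  apply: cvg_test; first exact: (iter_noninc hu hx).
  by move=> k; case: (L k) => h _; exact: h.
exists (fun i => limn (w i)); split; first by move=> i; case: (W i).
have yv0 : limn (w v) = 0.
  case: (W v) => Wc Wge W0.
  apply/eqP; rewrite eq_le W0 andbT leNgt; apply/negP => c0.
  set c := limn (w v) in Wge c0.
  have [K hK] : exists K, w u K < c.
    case: (pselect (exists K, w u K < c)) => // nK; exfalso.
    apply: (sum_contra hu hv hx (K:=0) c0) => k _; rewrite leNgt; apply/negP => H.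
    by apply: nK; exists k.
  have st : forall N, w u (K + N)%N = w u K.
    elim=> [|N IH]; first by rewrite addn0.
    rewrite addnS /w iterS (Tab_key (c:=c) ha hu hv) //.
    - by rewrite -/(w u (K + N)%N) IH.
    - exact: (Wge (K + N).+1).
  have pos : 0 < w u K.
    rewrite lt0r; apply/andP; split; first by apply/eqP; exact: hnz.
    by case: (L K) => h _; exact: h.
  apply: (sum_contra hu hv hx (K:=K) pos) => k Kk.
  by rewrite -(subnKC Kk) -/(w u _) st.
move=> i ia; case: (W i) => _ Wge W0.
apply/eqP; rewrite eq_le W0 andbT -yv0.
have cv : cvgn (w v) by apply/cvg_ex; eexists; case: (W v) => h _ _; exact: h.
apply: limr_ge => //; apply: nearW => k.
apply: le_trans (Wge k) _; case: (L k) => _; apply; by rewrite hv.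
Qed.

Lemma iter_lin (R : realType) a b (x : 'I_(a + b) -> R) (u : 'I_(a+b)) :
  (0 < a)%N -> val u = a.-1 -> forall k,
  exists M : 'M[int]_(a+b), M \in unitmx /\
    forall i, iter k (@Tab R a b) x i = \sum_j (M i j)%:~R * x j.
Proof.
move=> ha hu; elim=> [|k [M [hM hy]]].
  exists 1%:M; split; first exact: unitmx1.
  move=> i /=; rewrite (bigD1 i) //= mxE eqxx mulr1n mul1r big1 ?addr0 // => j.
  by rewrite mxE eq_sym => /negbTE ->; rewrite mulr0n mul0r.
by rewrite /=; exact: (Tab_lin ha hu hM hy).
Qed.

Lemma unit_row n (M : 'M[int]_n) r : M \in unitmx -> exists j, M r j != 0.
Proof.
move=> hM; case: (pselect (exists j, M r j != 0)) => // H; exfalso.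
have := congr1 (fun A : 'M[int]_n => A r r) (mulmxV hM).
rewrite !mxE eqxx big1 // => j _.
have -> : M r j = 0 by apply/eqP; apply/negPn/negP => h; apply: H; exists j.
by rewrite mul0r.
Qed.


Lemma sum_delta (R : realType) (M k : nat) (G : nat -> R) :
  \sum_(q < M) ((q == k :> nat)%:R * G q) = (k < M)%:R * G k.
Proof.
elim: M => [|M IH]; first by rewrite big_ord0 ltn0 mul0r.
rewrite big_ord_recr /= IH.
case: (ltngtP k M) => h.
- by rewrite (_ : (k < M.+1)%N = true) ?mul0r ?addr0 //; lia.
- by rewrite (_ : (k < M.+1)%N = false) ?mul0r ?addr0 //; lia.
- by rewrite h ltnSn mul0r add0r.
Qed.

Lemma sum_ind (R : realType) (M t : nat) :
  \sum_(m < M) ((m == t :> nat)%:R : R) = (t < M)%:R.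
Proof.
have := sum_delta M t (fun _ => 1 : R); rewrite mulr1.
by under eq_bigr do rewrite mulr1.
Qed.

Lemma sum_pair (R : realType) (F : nat -> nat -> R) (M : nat) :
  (forall p q, 0 <= F p q) ->
  \sum_(m < M) F (of_nat m).1 (of_nat m).2 <= \sum_(p < M) \sum_(q < M) F p q.
Proof.
move=> F0.
have E : forall m : 'I_M, F (of_nat m).1 (of_nat m).2 =
   \sum_(p < M) \sum_(q < M) ((p == (of_nat m).1 :> nat)%:R * ((q == (of_nat m).2 :> nat)%:R * F p q)).
  move=> m; have := to_nat_non_decreasing (of_nat m).1 (of_nat m).2.
  rewrite -surjective_pairing cancel_to_of => hm.
  under eq_bigr => p _ do rewrite -mulr_sumr (sum_delta M _ (F p)).
  rewrite (sum_delta M _ (fun p => (((of_nat m).2 < M)%N)%:R * F p (of_nat m).2)).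
  have -> : ((of_nat m).2 < M)%N by apply: leq_ltn_trans (ltn_ord m); lia.
  have -> : ((of_nat m).1 < M)%N by apply: leq_ltn_trans (ltn_ord m); lia.
  by rewrite !mul1r.
under eq_bigr do rewrite E.
rewrite exchange_big /=; apply: ler_sum => p _.
rewrite exchange_big /=; apply: ler_sum => q _.
under eq_bigr do rewrite mulrA mulrC.
rewrite -mulr_sumr; apply: ler_piMr => //.
have H : forall i : 'I_M, ((p == (of_nat i).1 :> nat)%:R * (q == (of_nat i).2 :> nat)%:R : R)
    = ((i : nat) == to_nat (p : nat, q : nat))%:R.
  move=> i; set t := to_nat _; case E': (of_nat i) => [c1 c2] /=.
  have -> : (i : nat) = to_nat (c1, c2) by rewrite -E' cancel_to_of.
  have ht : t = to_nat (p : nat, q : nat) by [].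
  clearbody t.
  case: (eqVneq (p : nat) c1) => h1; case: (eqVneq (q : nat) c2) => h2.
  - by rewrite ht -h1 -h2 eqxx mul1r.
  - rewrite mulr0; case: eqP => // e; rewrite ht in e.
    by move: (to_nat_inj _ _ e) => [_ e2]; rewrite e2 eqxx in h2.
  - rewrite mul0r; case: eqP => // e; rewrite ht in e.
    by move: (to_nat_inj _ _ e) => [e2 _]; rewrite e2 eqxx in h1.
  - rewrite mul0r; case: eqP => // e; rewrite ht in e.
    by move: (to_nat_inj _ _ e) => [e2 _]; rewrite e2 eqxx in h1.
under eq_bigr => i _ do rewrite H.
by rewrite sum_ind; case: ltnP.
Qed.

Lemma geom_sum (R : realType) (M : nat) :
  \sum_(p < M) ((2 : R) ^+ p.+1)^-1 = 1 - ((2 : R) ^+ M)^-1.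
Proof.
elim: M => [|M IH]; first by rewrite big_ord0 expr0 invr1 subrr.
rewrite big_ord_recr /= IH.
have h : (2 : R) ^+ M != 0 by apply: lt0r_neq0; apply: exprn_gt0; lra.
by rewrite exprS; field; exact: h.
Qed.

Lemma union_null (R : realType) n (N : ('I_n -> R) -> Prop) (P : nat -> ('I_n -> R) -> Prop) :
  (forall p, lebesgue_null (P p)) -> (forall x, N x -> exists p, P p x) ->
  lebesgue_null N.
Proof.
move=> hP hN eps e0.
have hP' : forall p, exists lu : (nat -> 'I_n -> R) * (nat -> 'I_n -> R),
    (forall m i, lu.1 m i <= lu.2 m i) /\
    (forall x, P p x -> exists m, forall i, lu.1 m i <= x i <= lu.2 m i) /\
    (forall M : nat, \sum_(m < M) \prod_(i < n) (lu.2 m i - lu.1 m i) <= eps / 2 ^+ p.+1).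
  move=> p; have [|l [u H]] := hP p (eps / 2 ^+ p.+1).
    by apply: divr_gt0 => //; apply: exprn_gt0.
  by exists (l, u).
have [f hf] := choice hP'.
pose l m i := (f (of_nat m).1).1 (of_nat m).2 i.
pose u m i := (f (of_nat m).1).2 (of_nat m).2 i.
exists l, u; split; [|split].
- by move=> m i; case: (hf (of_nat m).1) => h _; exact: h.
- move=> x /hN [p Px]; case: (hf p) => _ [/(_ x Px) [q hq] _].
  exists (to_nat (p, q)); rewrite /l /u cancel_of_to /=; exact: hq.
- move=> M.
  pose F p q := \prod_(i < n) ((f p).2 q i - (f p).1 q i).
  have F0 : forall p q, 0 <= F p q.
    move=> p q; apply: prodr_ge0 => i _; rewrite subr_ge0.
    by case: (hf p) => h _; exact: h.
  have H := sum_pair M F0.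
  have -> : \sum_(m < M) \prod_(i < n) (u m i - l m i) = \sum_(m < M) F (of_nat m).1 (of_nat m).2 by [].
  apply: le_trans H _.
  apply: (@le_trans _ _ (\sum_(p < M) (eps / 2 ^+ p.+1))).
    apply: ler_sum => p _.
    case: (hf p) => _ [_ h]; apply: le_trans (h M).
    by apply: ler_sum => q _; rewrite /F.
  rewrite -mulr_sumr geom_sum ger_pMr // lerBlDr lerDl invr_ge0.
  by apply: exprn_ge0; lra.
Qed.


Definition flo (R : realType) (k : nat) (z : R) : 'I_k.+1 := inord (minn (Num.truncn z) k).

Lemma flo_spec (R : realType) (k : nat) (z : R) :
  0 <= z <= k.+1%:R -> (flo k z)%:R <= z <= (flo k z)%:R + 1.
Proof.
case/andP=> z0 zk; rewrite /flo inordK; last by rewrite ltnS geq_minr.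
have [h|h] := leqP (Num.truncn z) k.
  by have := truncn_itv z0; rewrite -natr1 => /andP[h1 h2]; lra.
move: h zk; rewrite truncn_gt_nat -!natr1 => h zk; lra.
Qed.

Lemma xj_bound (R : realType) n (c : 'I_n -> int) (j : 'I_n) (x a : 'I_n -> R) (d : R) :
  c j != 0 -> \sum_i (c i)%:~R * x i = 0 -> (forall i, a i <= x i <= a i + d) ->
  `| x j + (\sum_(i | i != j) (c i)%:~R * a i) / (c j)%:~R | <= (\sum_i `|(c i)%:~R|) * d.
Proof.
move=> cj hs ha.
set cR := fun i => ((c i)%:~R : R).
have cj0 : cR j != 0 by rewrite /cR intr_eq0.
have cj1 : 1 <= `|cR j| by apply: norm_intr_ge1 => //; rewrite /cR rpred_int.
have d0 : 0 <= d by have := ha j; lra.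
rewrite (bigD1 j) //= in hs.
set Sx := \sum_(i | i != j) _ in hs.
set Sa := \sum_(i | i != j) _.
have e1 : cR j * (x j + Sa / cR j) = Sa - Sx.
  rewrite mulrDr mulrCA mulfV // mulr1 /cR; lra.
have e2 : `|Sa - Sx| <= (\sum_(i | i != j) `|cR i|) * d.
  rewrite /Sa /Sx -sumrB mulr_suml; apply: le_trans (ler_norm_sum _ _ _) _.
  apply: ler_sum => i _; rewrite -mulrBr normrM; apply: ler_wpM2l => //.
  rewrite ler_norml; have := ha i; lra.
have e3 : \sum_(i | i != j) `|cR i| <= \sum_i `|cR i|.
  by rewrite [X in _ <= X](bigD1 j) //= lerDr.
set A := `| x j + Sa / cR j |.
have A0 : 0 <= A by rewrite /A normr_ge0.
have : `|cR j| * A <= (\sum_i `|cR i|) * d.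
  rewrite /A -normrM e1; apply: le_trans e2 _; apply: ler_wpM2r => //.
set B := \sum_i `|cR i|.
move=> h; nra.
Qed.

Lemma sum_lt (R : realType) (M C : nat) : \sum_(m < M) ((m < C)%N%:R : R) = (minn M C)%:R.
Proof.
elim: M => [|M IH]; first by rewrite big_ord0 min0n.
rewrite big_ord_recr /= IH -natrD; congr (_%:R); case: ltnP => h; lia.
Qed.

Lemma piece_null (R : realType) n (c : 'I_n -> int) (Rb : nat) : (0 < n)%N ->
  lebesgue_null (fun x : 'I_n -> R => (forall i, 0 <= x i <= Rb%:R) /\
     (exists j, c j != 0) /\ \sum_j (c j)%:~R * x j = 0).
Proof.
move=> n0 eps e0.
case: (pselect (exists j, c j != 0)) => [[j cj]|nc]; last first.
  exists (fun _ _ => 0), (fun _ _ => 0); split; [by []|split].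
  - by move=> x [_ [h _]]; exfalso; apply: nc.
  - move=> M; rewrite big1 ?ltW // => m _.
    rewrite (eq_bigr (fun _ => 0)) ?subrr // prodr_const card_ord expr0n.
    by rewrite (negbTE (lt0n_neq0 n0)).
set cR := fun i => ((c i)%:~R : R).
set L := 1 + \sum_i `|cR i|.
have L1 : 1 <= L by rewrite /L lerDl sumr_ge0.
set Rr : R := Rb.+1%:R.
have Rr0 : 0 < Rr by rewrite /Rr ltr0n.
set k := Num.truncn (2 * L * Rr ^+ n / eps).
set K := k.+1.
have Kgt : 2 * L * Rr ^+ n / eps < K%:R by exact: truncnS_gt.
have K0 : 0 < K%:R :> R by rewrite ltr0n.
set d := Rr / K%:R.
have d0 : 0 < d by rewrite /d divr_gt0.
set q := 2 * L / K%:R.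
have q0 : 0 < q by rewrite /q divr_gt0 //; lra.
pose g (f : {ffun 'I_n -> 'I_K}) : R :=
  - (\sum_(i | i != j) cR i * ((f i)%:R * d)) / cR j.
pose lf (f : {ffun 'I_n -> 'I_K}) i :=
  if i == j then g f - L * d + (f j)%:R * (d * q) else (f i)%:R * d.
pose wd i := d * (if i == j then q else 1).
have wd0 : forall i, 0 <= wd i.
  by move=> i; rewrite /wd; case: ifP => _; apply: mulr_ge0; lra.
pose C := #|{ffun 'I_n -> 'I_K}|.
pose l m i := if (insub m : option 'I_C) is Some o then lf (enum_val o) i else 0.
pose u m i := if (insub m : option 'I_C) is Some o then lf (enum_val o) i + wd i else 0.
exists l, u; split; [|split].
- move=> m i; rewrite /l /u; case: (insub m) => [o|] //.
  by rewrite lerDl.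
- move=> x [hx [_ hs]].
  pose f0 : {ffun 'I_n -> 'I_K} := [ffun i => flo k (x i / d)].
  have hf0 : forall i, (f0 i)%:R * d <= x i <= (f0 i)%:R * d + d.
    move=> i; rewrite ffunE.
    have : 0 <= x i / d <= k.+1%:R.
      have := hx i => /andP[h1 h2].
      rewrite divr_ge0 ?(ltW d0) //= ler_pdivrMr // -/K.
      have -> : K%:R * d = Rr by rewrite /d mulrCA mulfV ?mulr1 // gt_eqF.
      by move: h2; rewrite /Rr -natr1; lra.
    move/flo_spec => /andP[h1 h2].
    move: h1 h2; rewrite ler_pdivlMr // ler_pdivrMr // => h1 h2.
    apply/andP; split => //; lra.
  have hb := xj_bound (a := fun i => (f0 i)%:R * d) cj hs hf0.
  have hg : x j - g f0 = x j + (\sum_(i | i != j) cR i * ((f0 i)%:R * d)) / cR j.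
    by rewrite /g mulNr opprK.
  rewrite -/cR -hg in hb.
  have hb2 : - (L * d) + d <= x j - g f0 <= L * d - d.
    move: hb; rewrite ler_norml /L mulrDl mul1r; lra.
  pose zj := (x j - (g f0 - L * d)) / (d * q).
  have hqK : d * q * K%:R = 2 * L * d.
    by rewrite /q; field; rewrite pnatr_eq0.
  have dq0 : 0 < d * q by apply: mulr_gt0.
  have zj_rng : 0 <= zj <= k.+1%:R.
    rewrite divr_ge0 ?(ltW dq0) //=; last by lra.
    rewrite ler_pdivrMr // (_ : k.+1%:R * (d * q) = 2 * L * d); last by rewrite -hqK mulrC.
    lra.
  pose f : {ffun 'I_n -> 'I_K} := [ffun i => if i == j then flo k zj else f0 i].
  have gf : g f = g f0.
    rewrite /g; congr (- _ / _); apply: eq_bigr => i ij; by rewrite ffunE (negbTE ij).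
  exists (enum_rank f : nat) => i.
  rewrite /l /u valK enum_rankK /lf gf /wd.
  case: ifP => [/eqP ->|ij].
    rewrite ffunE eqxx.
    have := flo_spec zj_rng => /andP[h1 h2].
    move: h1 h2; rewrite ler_pdivlMr // ler_pdivrMr // => h1 h2.
    apply/andP; split; lra.
  by rewrite ffunE ij mulr1; exact: hf0.
- move=> M.
  have V : \prod_(i < n) wd i = d ^+ n * q.
    by rewrite /wd big_split /= prodr_const card_ord -big_mkcond big_pred1_eq.
  apply: (@le_trans _ _ (\sum_(m < M) ((m < C)%N%:R * (d ^+ n * q)))).
    apply: ler_sum => m _; rewrite /l /u.
    case: insubP => [o ho vo|ho] /=.
      rewrite ho mul1r -V le_eqVlt; apply/orP; left; apply/eqP.
      by apply: eq_bigr => i _; rewrite addrC addKr.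
    rewrite (negbTE ho) mul0r (eq_bigr (fun _ => 0)) ?subrr // prodr_const card_ord expr0n.
    by rewrite (negbTE (lt0n_neq0 n0)).
  rewrite -mulr_suml sum_lt.
  have dq0 : 0 <= d ^+ n * q by apply: mulr_ge0; [apply: exprn_ge0; lra | lra].
  apply: (@le_trans _ _ (C%:R * (d ^+ n * q))).
    by apply: ler_wpM2r => //; rewrite ler_nat geq_minr.
  have hC : (C%:R : R) = K%:R ^+ n by rewrite /C card_ffun !card_ord natrX.
  have hKd : K%:R * d = Rr by rewrite /d mulrCA mulfV ?mulr1 // gt_eqF.
  rewrite hC mulrA -exprMn hKd /q mulrA ler_pdivrMr //.
  move: Kgt; rewrite ltr_pdivrMr // => h.
  lra.
Qed.

Lemma null_sub (R : realType) n (N N' : ('I_n -> R) -> Prop) :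
  (forall x, N x -> N' x) -> lebesgue_null N' -> lebesgue_null N.
Proof.
move=> sub h eps e0; have [l [u [h1 [h2 h3]]]] := h eps e0.
exists l, u; split => //; split => // x /sub; exact: h2.
Qed.

Theorem lemma4p2 (R : realType) (a b : nat) (ha : (1 <= a)%N) (hb : (1 <= b)%N) :
  lebesgue_null
    (fun x : 'I_(a + b) -> R =>
       Lambda x /\
       ~ (exists y : 'I_(a + b) -> R,
            (forall i, (fun k : nat => iter k (@Tab R a b) x i) @ \oo --> y i) /\
            (forall i : 'I_(a + b), (i <= a)%N -> y i = 0))).
Proof.
have hu' : (a.-1 < a + b)%N by lia.
have hv' : (a < a + b)%N by lia.
have hw' : ((a + b).-1 < a + b)%N by lia.
have n0 : (0 < a + b)%N by lia.
pose u := Ordinal hu'; pose v := Ordinal hv'; pose w := Ordinal hw'.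
have hu : val u = a.-1 by [].
have hv : val v = a by [].
pose piece (cR : {ffun 'I_(a + b) -> int} * nat) := fun x : 'I_(a + b) -> R =>
  (forall i, 0 <= x i <= cR.2%:R) /\ (exists j, cR.1 j != 0) /\
  \sum_j (cR.1 j)%:~R * x j = 0.
pose P (p : nat) := fun x : 'I_(a + b) -> R =>
  if (pickle_inv p : option ({ffun 'I_(a + b) -> int} * nat)) is Some cR then piece cR x else False.
apply: (union_null (P := P)).
  move=> p; rewrite /P; case: pickle_inv => [cR|].
    exact: (piece_null (fun j => cR.1 j) cR.2 n0).
  apply: (null_sub (N' := fun x => (forall i, 0 <= x i <= 0%:R) /\
     (exists j, (fun _ : 'I_(a + b) => 0 : int) j != 0) /\
     \sum_j ((fun _ : 'I_(a + b) => 0 : int) j)%:~R * x j = 0)) => //.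
  exact: piece_null.
move=> x [hx hnot].
have [k hk] : exists k, iter k (@Tab R a b) x u = 0.
  case: (pselect (exists k, iter k (@Tab R a b) x u = 0)) => // H; exfalso.
  apply: hnot; apply: (good (u := u) (v := v)) => // k e; apply: H; by exists k.
have [M [hM hrep]] := iter_lin x ha hu k.
have [j hj] := unit_row u hM.
pose Rb := (Num.truncn (x w)).+1.
exists (pickle ([ffun j => M u j], Rb)); rewrite /P pickleK_inv /piece /=.
split; [|split].
- move=> i; case: hx => hx0 hxm; rewrite hx0 /=.
  apply: le_trans (hxm i w _) _; first by rewrite /= -ltnS prednK //; exact: ltn_ord.
  by apply: ltW; exact: truncnS_gt.
- by exists j; rewrite ffunE.
- have -> : \sum_j ([ffun j => M u j] j)%:~R * x j = \sum_j (M u j)%:~R * x j.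
    by apply: eq_bigr => i _; rewrite ffunE.
  by rewrite -hrep.
Qed.
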